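(* Suppose $k$ is a finite field with the trivial absolute value or a local field, and let $X$ be a topological space. For every maximal ideal $m$ of $C_{bd}(X,k)$ the quotient $C_{bd}(X,k)/m$ is $k$, and denoting by $f(m)\in k$ the image of $f$, one has $C_{bd}(X,k)=k\oplus m$ orthogonally and $$\|f\|=\sup_{m\in\mathrm{Max}(C_{bd}(X,k))}|f(m)|\quad\text{for all } f\in C_{bd}(X,k).$$
   Context: A local field means a complete discretely valued field with finite residue field. $C_{bd}(X,k)$ is the $k$-algebra of bounded continuous functions $X\to k$ with the supremum norm $\|f\|=\sup_{x\in X}|f(x)|$; $\mathrm{Max}$ denotes the set of maximal ideals. Orthogonal means $\|a+g\|=\max\{|a|,\|g\|\}$ for $a\in k$, $g\in m$. *)

(* Defs.v *)
From HB Require Import structures.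
From mathcomp Require Import all_boot all_algebra.
From Stdlib Require Import Reals ClassicalEpsilon.

Set Implicit Arguments.
Unset Strict Implicit.
Unset Printing Implicit Defensive.

Local Open Scope R_scope.

Section ValuedField.
Variable k : fieldType.
Variable abs : k -> R.

Definition is_absval : Prop :=
  (forall x, 0 <= abs x) /\
  (forall x, abs x = 0 <-> x = (@GRing.zero k)) /\
  (forall x y, abs (GRing.mul x y) = abs x * abs y) /\
  (forall x y, abs (GRing.add x y) <= abs x + abs y).

Definition nonarchimedean : Prop :=
  forall x y, abs (GRing.add x y) <= Rmax (abs x) (abs y).

Definition finite_trivially_valued : Prop :=
  (exists s : seq k, forall x : k, x \in s) /\
  (forall x : k, abs x = if x == (@GRing.zero k) then 0 else 1).

Definition discretely_valued : Prop :=
  is_absval /\ nonarchimedean /\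
  exists pi : k, 0 < abs pi < 1 /\
    forall x : k, x != (@GRing.zero k) -> exists n : Z, abs x = powerRZ (abs pi) n.

Definition complete_field : Prop :=
  forall u : nat -> k,
    (forall eps, 0 < eps -> exists N, forall n m, (N <= n)%nat -> (N <= m)%nat ->
        abs (GRing.add (u n) (GRing.opp (u m))) < eps) ->
    exists l : k, forall eps, 0 < eps -> exists N, forall n, (N <= n)%nat ->
        abs (GRing.add (u n) (GRing.opp l)) < eps.

(* residue field O/mO, O = {|x| <= 1}, mO = {|x| < 1}, is finite *)
Definition finite_residue_field : Prop :=
  exists s : seq k, (forall y, y \in s -> abs y <= 1) /\
    forall x : k, abs x <= 1 -> exists2 y, y \in s & abs (GRing.add x (GRing.opp y)) < 1.

Definition local_field : Prop :=
  discretely_valued /\ complete_field /\ finite_residue_field.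

End ValuedField.

(* supremum of a set of nonnegative reals, with the convention sup(empty) = 0 *)
Definition supR (S : R -> Prop) : R :=
  epsilon (inhabits 0) (fun r => is_lub (fun y => y = 0 \/ S y) r).

Definition is_topology (X : Type) (op : (X -> Prop) -> Prop) : Prop :=
  op (fun _ => True) /\ op (fun _ => False) /\
  (forall U V, op U -> op V -> op (fun x => U x /\ V x)) /\
  (forall (I : Type) (F : I -> X -> Prop), (forall i, op (F i)) ->
      op (fun x => exists i, F i x)).

Section Cbd.
Variable k : fieldType.
Variable abs : k -> R.
Variable X : Type.
Variable op : (X -> Prop) -> Prop.

Definition fconst (a : k) : X -> k := fun _ => a.
Definition fadd (f g : X -> k) : X -> k := fun x => GRing.add (f x) (g x).
Definition fsub (f g : X -> k) : X -> k := fun x => GRing.add (f x) (GRing.opp (g x)).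
Definition fmul (f g : X -> k) : X -> k := fun x => GRing.mul (f x) (g x).

Definition continuous (f : X -> k) : Prop :=
  forall x eps, 0 < eps -> exists U, op U /\ U x /\
     forall y, U y -> abs (GRing.add (f y) (GRing.opp (f x))) < eps.

Definition bounded (f : X -> k) : Prop :=
  exists M, forall x, abs (f x) <= M.

Definition Cbd (f : X -> k) : Prop := continuous f /\ bounded f.

Definition supnorm (f : X -> k) : R := supR (fun r => exists x, r = abs (f x)).

Definition is_ideal (I : (X -> k) -> Prop) : Prop :=
  (forall f, I f -> Cbd f) /\
  I (fconst (@GRing.zero k)) /\
  (forall f g, I f -> I g -> I (fadd f g)) /\
  (forall h f, Cbd h -> I f -> I (fmul h f)).

Definition is_maximal_ideal (m : (X -> k) -> Prop) : Prop :=
  is_ideal m /\ ~ m (fconst (@GRing.one k)) /\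
  forall J, is_ideal J -> (forall f, m f -> J f) ->
     (forall f, J f -> m f) \/ J (fconst (@GRing.one k)).

(* f(m): the image of f in C_bd(X,k)/m = k, i.e. the a with f - a in m *)
Definition evalm (m : (X -> k) -> Prop) (f : X -> k) : k :=
  epsilon (inhabits (@GRing.zero k)) (fun a => m (fsub f (fconst a))).

End Cbd.

(* Main.v *)
Require Import Defs.
From mathcomp Require Import all_boot all_algebra.
From Stdlib Require Import Reals Lra Lia ClassicalEpsilon FunctionalExtensionality Classical.
Ltac rfield := field.
Ltac rring := ring.
From mathcomp.algebra_tactics Require Import ring.

Set Implicit Arguments.
Unset Strict Implicit.
Unset Printing Implicit Defensive.
Import GRing.Theory.

Local Open Scope R_scope.

Section AbsBasics.
Variable k : fieldType.
Variable abs : k -> R.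
Hypothesis Habs : is_absval abs.

Local Notation k0 := (@GRing.zero k).
Local Notation k1 := (@GRing.one k).

Lemma abs_ge0 x : 0 <= abs x.
Proof. by case: Habs. Qed.
Lemma abs0 : abs k0 = 0.
Proof. by case: Habs => _ [H _]; apply H. Qed.
Lemma abs_eq0 x : abs x = 0 -> x = k0.
Proof. by case: Habs => _ [H _]; apply H. Qed.
Lemma absM x y : abs (GRing.mul x y) = abs x * abs y.
Proof. by case: Habs => _ [_ [H _]]. Qed.
Lemma absD x y : abs (GRing.add x y) <= abs x + abs y.
Proof. by case: Habs => _ [_ [_ H]]. Qed.
Lemma abs_neq0 x : x <> k0 -> 0 < abs x.
Proof. move=> H; have := abs_ge0 x; have := abs_eq0 (x:=x).
case: (Req_dec (abs x) 0) => [h1|h1]; [by move=> /(_ h1)|lra]. Qed.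
Lemma abs1 : abs k1 = 1.
Proof.
have h : abs k1 = abs k1 * abs k1 by rewrite -absM mulr1.
have h2 : 0 < abs k1 by apply: abs_neq0; apply/eqP; exact: oner_neq0.
nra.
Qed.
Lemma absN x : abs (GRing.opp x) = abs x.
Proof.
have h : abs (GRing.opp k1) * abs (GRing.opp k1) = 1.
  by rewrite -absM mulrNN mulr1 abs1.
have h2 := abs_ge0 (GRing.opp k1).
have e : abs (GRing.opp k1) = 1 by nra.
by rewrite -mulN1r absM e Rmult_1_l.
Qed.
Lemma absB x y : abs (GRing.add x (GRing.opp y)) = abs (GRing.add y (GRing.opp x)).
Proof. by rewrite -absN opprB. Qed.
Lemma absV x : x <> k0 -> abs (GRing.inv x) = / abs x.
Proof.
move=> H; have h : abs (GRing.inv x) * abs x = 1.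
  by rewrite -absM mulVf ?abs1 //; apply/eqP.
have := abs_neq0 H; move=> hp.
apply: (Rmult_eq_reg_r (abs x)); last lra.
by rewrite h Rinv_l //; lra.
Qed.
Lemma absB_tri x y z : abs (GRing.add x (GRing.opp z)) <=
   abs (GRing.add x (GRing.opp y)) + abs (GRing.add y (GRing.opp z)).
Proof.
have -> : GRing.add x (GRing.opp z) = GRing.add (GRing.add x (GRing.opp y)) (GRing.add y (GRing.opp z)) by ring.
exact: absD.
Qed.
End AbsBasics.
Section LocalCover.
Variable k : fieldType.
Variable abs : k -> R.
Hypothesis Habs : is_absval abs.
Hypothesis Hna : nonarchimedean abs.
Variable pi : k.
Hypothesis Hpi : 0 < abs pi < 1.
Hypothesis Hdisc : forall x : k, x != (@GRing.zero k) -> exists n : Z, abs x = powerRZ (abs pi) n.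
Variable s0 : seq k.
Hypothesis Hres : forall x : k, abs x <= 1 -> exists2 y, y \in s0 & abs (GRing.add x (GRing.opp y)) < 1.

Local Notation k0 := (@GRing.zero k).
Local Notation k1 := (@GRing.one k).
Local Notation sub a b := (GRing.add a (GRing.opp b)).
Local Notation p := (abs pi).

Lemma pow_le1 (q : R) n : 0 <= q <= 1 -> q ^ n <= 1.
Proof.
move=> [h0 h1]; elim: n => [|n IH] /=; first lra.
have := pow_le q n h0; nra.
Qed.

Lemma small_le z : abs z < 1 -> abs z <= p.
Proof.
move=> hz; case: (eqVneq z k0) => [->|zn]; first by rewrite (abs0 Habs); lra.
have [n hn] := Hdisc zn; rewrite hn in hz *.
case: n hn hz => [|q|q] hn /=.
- lra.
- have := Pos2Nat.is_pos q; case: (Pos.to_nat q) => [|j] hj; first lia.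
  rewrite /= => _; have := pow_le1 j (conj (Rlt_le _ _ (proj1 Hpi)) (Rlt_le _ _ (proj2 Hpi))).
  move: Hpi => [a b]; nra.
- move=> hz; exfalso.
  have h1 := pow_le1 (Pos.to_nat q) (conj (Rlt_le _ _ (proj1 Hpi)) (Rlt_le _ _ (proj2 Hpi))).
  have h2 : 0 < p ^ Pos.to_nat q by apply: pow_lt; lra.
  have : 1 <= / p ^ Pos.to_nat q.
    rewrite -Rinv_1; apply: Rinv_le_contravar => //.
  lra.
Qed.

Lemma pi_neq0 : pi <> k0.
Proof. by move=> e; move: Hpi; rewrite e (abs0 Habs); lra. Qed.

Lemma absX j : abs (GRing.exp pi j) = p ^ j.
Proof. elim: j => [|j IH]; first by rewrite expr0 (abs1 Habs).
by rewrite exprS (absM Habs) IH. Qed.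

Lemma unit_cover n : exists s : seq k, forall z, abs z <= 1 ->
  exists y, y \in s /\ abs (sub z y) <= p ^ n.
Proof.
elim: n => [|n [s IH]].
  exists [:: k0] => z hz; exists k0; split; first by rewrite mem_seq1.
  by rewrite oppr0 addr0 /=.
exists [seq GRing.add y0 (GRing.mul pi y) | y0 <- s0, y <- s] => z hz.
have [y0 iy0 hy0] := Hres hz.
have hy0' := small_le hy0.
set t := GRing.mul (sub z y0) (GRing.inv pi).
have ht : abs t <= 1.
  rewrite /t (absM Habs) (absV Habs pi_neq0).
  have hp := proj1 Hpi.
  have -> : 1 = p * / p by rewrite Rinv_r //; lra.
  apply: Rmult_le_compat_r => //; apply: Rlt_le; apply: Rinv_0_lt_compat => //.
have [y [iy hy]] := IH t ht.
exists (GRing.add y0 (GRing.mul pi y)); split; first exact: allpairs_f.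
have -> : sub z (GRing.add y0 (GRing.mul pi y)) = GRing.mul pi (sub t y).
  rewrite /t; have := pi_neq0 => /eqP pn; by field.
rewrite (absM Habs) /=.
apply: Rmult_le_compat_l => //; lra.
Qed.

Lemma local_cover M r : 0 < r -> exists s : seq k,
  forall z, abs z <= M -> exists y, y \in s /\ abs (sub z y) < r.
Proof.
move=> rp.
have hM : 0 < Rmax M 1 by have := Rmax_r M 1; lra.
have hpa : Rabs p < 1 by rewrite Rabs_pos_eq; lra.
have [J HJ] := pow_lt_1_zero p hpa (/ Rmax M 1) (Rinv_0_lt_compat _ hM).
have qJ := HJ J (le_n J); rewrite Rabs_pos_eq in qJ; last by apply: pow_le; lra.
set q := p ^ J in qJ.
have qp : 0 < q by apply: pow_lt; lra.
have [N HN] := pow_lt_1_zero p hpa (r * q) (Rmult_lt_0_compat _ _ rp qp).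
have qN := HN N (le_n N); rewrite Rabs_pos_eq in qN; last by apply: pow_le; lra.
have [s Hs] := unit_cover N.
have pJn : GRing.exp pi J <> k0.
  by apply/eqP; apply: expf_neq0; apply/eqP; exact: pi_neq0.
exists [seq GRing.mul y (GRing.inv (GRing.exp pi J)) | y <- s] => z hz.
set w := GRing.mul z (GRing.exp pi J).
have hw : abs w <= 1.
  rewrite /w (absM Habs) absX -/q.
  have h1 : abs z * q <= Rmax M 1 * q.
    apply: Rmult_le_compat_r; [lra|]; apply: Rle_trans hz (Rmax_l _ _).
  have h2 : Rmax M 1 * q < Rmax M 1 * / Rmax M 1 by apply: Rmult_lt_compat_l.
  rewrite Rinv_r in h2; lra.
have [y [iy hy]] := Hs w hw.
exists (GRing.mul y (GRing.inv (GRing.exp pi J))); split; first exact: map_f.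
have -> : sub z (GRing.mul y (GRing.inv (GRing.exp pi J))) =
   GRing.mul (sub w y) (GRing.inv (GRing.exp pi J)).
  by rewrite /w; move/eqP: pJn => pn; field.
rewrite (absM Habs) (absV Habs pJn) absX -/q.
have : sub w y = sub w y by [].
have h3 : abs (sub w y) * / q <= p ^ N * / q.
  apply: Rmult_le_compat_r => //; apply: Rlt_le; apply: Rinv_0_lt_compat => //.
have h4 : p ^ N * / q < r * q * / q.
  apply: Rmult_lt_compat_r => //; apply: Rinv_0_lt_compat => //.
have h5 : r * q * / q = r by rfield; lra.
lra.
Qed.
End LocalCover.
Section CbdSec.
Variable k : fieldType.
Variable abs : k -> R.
Hypothesis Habs : is_absval abs.
Hypothesis Hna : nonarchimedean abs.
Variable X : Type.
Variable op : (X -> Prop) -> Prop.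
Hypothesis Hop : is_topology op.

Local Notation k0 := (@GRing.zero k).
Local Notation k1 := (@GRing.one k).
Local Notation CB := (Cbd abs op).

Lemma fext (P : (X -> k) -> Prop) f g : P f -> (forall x, f x = g x) -> P g.
Proof. by move=> H e; have <- : f = g by apply: functional_extensionality. Qed.

Lemma bounded_pos (f : X -> k) : Defs.bounded abs f -> exists M, 0 < M /\ forall x, abs (f x) <= M.
Proof. case=> M HM; exists (Rmax M 0 + 1); split; first by have := Rmax_r M 0; lra.
by move=> x; have := HM x; have := Rmax_l M 0; lra. Qed.

Lemma op_and U V : op U -> op V -> op (fun x => U x /\ V x).
Proof. by case: Hop => _ [_ [H _]]; apply: H. Qed.

Lemma Cbd_const a : CB (fconst a).
Proof.
split; last by exists (abs a) => x; apply: Rle_refl.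
move=> x eps He; exists (fun _ => True); split; first by case: Hop.
split=> // y _; rewrite /fconst subrr (abs0 Habs); lra.
Qed.

Lemma Cbd_add f g : CB f -> CB g -> CB (fadd f g).
Proof.
move=> [cf [Mf bf]] [cg [Mg bg]]; split; last first.
  exists (Mf + Mg) => x; rewrite /fadd; have := absD Habs (f x) (g x); have := bf x; have := bg x; lra.
move=> x eps He.
have [U [oU [Ux HU]]] := cf x (eps/2) ltac:(lra).
have [V [oV [Vx HV]]] := cg x (eps/2) ltac:(lra).
exists (fun y => U y /\ V y); split; first exact: op_and.
split=> // y [Uy Vy]; rewrite /fadd.
have -> : GRing.add (GRing.add (f y) (g y)) (GRing.opp (GRing.add (f x) (g x))) =
   GRing.add (GRing.add (f y) (GRing.opp (f x))) (GRing.add (g y) (GRing.opp (g x))) by ring.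
have := absD Habs (GRing.add (f y) (GRing.opp (f x))) (GRing.add (g y) (GRing.opp (g x))).
have := HU y Uy; have := HV y Vy; lra.
Qed.

Lemma Cbd_mul f g : CB f -> CB g -> CB (fmul f g).
Proof.
move=> [cf bf0] [cg bg0].
have [Mf [Mfp bf]] := bounded_pos bf0; have [Mg [Mgp bg]] := bounded_pos bg0.
split; last first.
  exists (Mf * Mg) => x; rewrite /fmul absM //.
  have := abs_ge0 Habs (f x); have := abs_ge0 Habs (g x); have := bf x; have := bg x; nra.
move=> x eps He.
have [U [oU [Ux HU]]] := cf x (eps/(2*Mg)) ltac:(apply: Rdiv_lt_0_compat; lra).
have [V [oV [Vx HV]]] := cg x (eps/(2*Mf)) ltac:(apply: Rdiv_lt_0_compat; lra).
exists (fun y => U y /\ V y); split; first exact: op_and.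
split=> // y [Uy Vy]; rewrite /fmul.
have -> : GRing.add (GRing.mul (f y) (g y)) (GRing.opp (GRing.mul (f x) (g x))) =
   GRing.add (GRing.mul (GRing.add (f y) (GRing.opp (f x))) (g y))
             (GRing.mul (f x) (GRing.add (g y) (GRing.opp (g x)))) by ring.
apply: Rle_lt_trans; first exact: absD.
rewrite !absM //.
have := HU y Uy; have := HV y Vy.
set a := abs (GRing.add (f y) (GRing.opp (f x))) .
set b := abs (GRing.add (g y) (GRing.opp (g x))) .
have ha : 0 <= a by apply: abs_ge0.
have hb : 0 <= b by apply: abs_ge0.
have := bf x; have := bg y; have := abs_ge0 Habs (f x); have := abs_ge0 Habs (g y).
move=> p1 p2 p3 p4 hb' ha'.
have e1 : a * Mg < eps / 2.
  have -> : eps / 2 = eps / (2 * Mg) * Mg by rfield; lra.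
  apply: Rmult_lt_compat_r => //.
have e2 : Mf * b < eps / 2.
  have -> : eps / 2 = Mf * (eps / (2 * Mf)) by rfield; lra.
  apply: Rmult_lt_compat_l => //.
have : a * abs (g y) <= a * Mg by apply: Rmult_le_compat_l.
have : abs (f x) * b <= Mf * b by apply: Rmult_le_compat_r.
lra.
Qed.

Lemma Cbd_opp f : CB f -> CB (fmul (fconst (GRing.opp k1)) f).
Proof. by move=> H; apply: Cbd_mul => //; apply: Cbd_const. Qed.

Lemma Cbd_sub f g : CB f -> CB g -> CB (fsub f g).
Proof.
move=> Hf Hg; apply: (@fext _ (fadd f (fmul (fconst (GRing.opp k1)) g))).
  by apply: Cbd_add => //; apply: Cbd_opp.
by move=> x; rewrite /fadd /fmul /fsub /fconst mulN1r.
Qed.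
Section OneIdeal.
Variable m : (X -> k) -> Prop.
Hypothesis Hm : is_maximal_ideal abs op m.

Lemma m_Cbd f : m f -> CB f.
Proof. by case: Hm => [[H _] _]; apply: H. Qed.
Lemma m0 : m (fconst k0).
Proof. by case: Hm => [[_ [H _]] _]. Qed.
Lemma m_add f g : m f -> m g -> m (fadd f g).
Proof. by case: Hm => [[_ [_ [H _]]] _]; apply: H. Qed.
Lemma m_mul h f : CB h -> m f -> m (fmul h f).
Proof. by case: Hm => [[_ [_ [_ H]]] _]; apply: H. Qed.
Lemma m_not1 : ~ m (fconst k1).
Proof. by case: Hm => _ [H _]. Qed.
Lemma m_sub f g : m f -> m g -> m (fsub f g).
Proof.
move=> Hf Hg; apply: (@fext m (fadd f (fmul (fconst (GRing.opp k1)) g))).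
  by apply: m_add => //; apply: m_mul => //; apply: Cbd_const.
by move=> x; rewrite /fadd /fmul /fsub /fconst mulN1r.
Qed.

Lemma m_unit h d : m h -> 0 < d -> (forall x, d <= abs (h x)) -> False.
Proof.
move=> mh dp hd; apply: m_not1.
have hCB := m_Cbd mh.
have hn : forall x, h x <> k0.
  by move=> x e; have := hd x; rewrite e abs0 //; lra.
set c := fun x => GRing.inv (h x).
have cb : forall x, abs (c x) <= / d.
  move=> x; rewrite /c absV //; apply: Rinv_le_contravar => //.
have cCB : CB c.
  split; last by exists (/ d).
  move=> x eps He.
  case: hCB => ch _.
  have [U [oU [Ux HU]]] := ch x (eps * d * d) ltac:(apply: Rmult_lt_0_compat => //; apply: Rmult_lt_0_compat => //).
  exists U; split=> //; split=> // y Uy.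
  have -> : GRing.add (c y) (GRing.opp (c x)) =
     GRing.mul (GRing.mul (GRing.add (h x) (GRing.opp (h y))) (c x)) (c y).
    rewrite /c; have := hn x; have := hn y; move=> /eqP h1 /eqP h2; field.
    by apply/andP.
  rewrite !absM // (absB Habs).
  have := HU y Uy; have := cb x; have := cb y; have := abs_ge0 Habs (c x); have := abs_ge0 Habs (c y).
  have := abs_ge0 Habs (GRing.add (h y) (GRing.opp (h x))).
  set A := abs (GRing.add (h y) (GRing.opp (h x))).
  set B := abs (c x); set C := abs (c y).
  move=> a0 c0 b0 cle ble Alt; clearbody A B C.
  have id : / d * d = 1 by apply: Rinv_l; lra.
  have e1 : A * B * C <= A * / d * / d.
    apply Rmult_le_compat => //; first by apply: Rmult_le_pos.
    by apply: Rmult_le_compat_l.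
  have e2 : A * / d * / d < eps * d * d * / d * / d.
    apply: Rmult_lt_compat_r; first by apply: Rinv_0_lt_compat.
    apply: Rmult_lt_compat_r => //; by apply: Rinv_0_lt_compat.
  have e3 : eps * d * d * / d * / d = eps.
    by rfield; lra.
  lra.
apply: (@fext m (fmul c h)); first exact: m_mul.
by move=> x; rewrite /fmul /c /fconst mulVf //; apply/eqP.
Qed.

Lemma comax u : CB u -> ~ m u ->
  exists a c, m a /\ CB c /\ forall x, k1 = GRing.add (a x) (GRing.mul (c x) (u x)).
Proof.
move=> uCB nmu.
pose J := fun g => CB g /\ exists a c, m a /\ CB c /\
   forall x, g x = GRing.add (a x) (GRing.mul (c x) (u x)).
have JI : is_ideal abs op J.
  split; first by move=> f [].
  split.
    split; first exact: Cbd_const.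
    exists (fconst k0), (fconst k0); split; first exact: m0.
    split; first exact: Cbd_const.
    by move=> x; rewrite /fconst mul0r addr0.
  split.
    move=> f g [fC [a1 [c1 [ma1 [cc1 e1]]]]] [gC [a2 [c2 [ma2 [cc2 e2]]]]].
    split; first exact: Cbd_add.
    exists (fadd a1 a2), (fadd c1 c2); split; first exact: m_add.
    split; first exact: Cbd_add.
    by move=> x; rewrite /fadd e1 e2; ring.
  move=> h f hC [fC [a1 [c1 [ma1 [cc1 e1]]]]].
  split; first exact: Cbd_mul.
  exists (fmul h a1), (fmul h c1); split; first exact: m_mul.
  split; first exact: Cbd_mul.
  by move=> x; rewrite /fmul e1; ring.
have mJ : forall f, m f -> J f.
  move=> f mf; split; first exact: m_Cbd.
  exists f, (fconst k0); split=> //; split; first exact: Cbd_const.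
  by move=> x; rewrite /fconst mul0r addr0.
case: Hm => _ [_ Hmax].
case: (Hmax J JI mJ) => [H|[_ [a [c [ma [cc e]]]]]].
  exfalso; apply: nmu; apply: H; split=> //.
  exists (fconst k0), (fconst k1); split; first exact: m0.
  split; first exact: Cbd_const.
  by move=> x; rewrite /fconst mul1r add0r.
by exists a, c.
Qed.

Lemma m_prime u v : CB u -> CB v -> m (fmul u v) -> m u \/ m v.
Proof.
move=> uC vC muv; case: (classic (m u)) => [|nu]; first by left.
right; have [a [c [ma [cc e]]]] := comax uC nu.
apply: (@fext m (fadd (fmul v a) (fmul c (fmul u v)))).
  by apply: m_add; apply: m_mul.
by move=> x; rewrite /fadd /fmul; rewrite -[RHS]mulr1 [in RHS](e x); ring.
Qed.

Lemma m_closed f : CB f ->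
  (forall eps, 0 < eps -> exists e, CB e /\ m (fsub f e) /\ forall x, abs (e x) <= eps) ->
  m f.
Proof.
move=> fC H; apply: NNPP => nf.
have [a [c [ma [cc e]]]] := comax fC nf.
have cc' := cc; case: cc' => _ /bounded_pos [C [Cp cb]] //.
have [g [gC [mg gb]]] := H (/ (2 * C)) ltac:(apply: Rinv_0_lt_compat; lra).
apply: (@m_unit (fadd a (fmul c (fsub f g))) (/ 2)).
- by apply: m_add => //; apply: m_mul => //; apply: m_sub.
- lra.
move=> x.
have ex : fadd a (fmul c (fsub f g)) x = GRing.add k1 (GRing.opp (GRing.mul (c x) (g x))).
  by rewrite /fadd /fmul /fsub (e x); ring.
rewrite ex.
have t := absD Habs (GRing.add k1 (GRing.opp (GRing.mul (c x) (g x)))) (GRing.mul (c x) (g x)).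
rewrite subrK abs1 // absM // in t.
have : abs (c x) * abs (g x) <= C * / (2 * C).
  apply Rmult_le_compat => //; [apply: (abs_ge0 Habs)|apply: (abs_ge0 Habs)].
have q : C * / (2 * C) = / 2 by rfield; lra.
lra.
Qed.
End OneIdeal.
Local Notation sub a b := (GRing.add a (GRing.opp b)).

Lemma ultra_sub x y z : abs (sub x z) <= Rmax (abs (sub x y)) (abs (sub y z)).
Proof.
have -> : sub x z = GRing.add (sub x y) (sub y z) by ring.
exact: Hna.
Qed.

Lemma ultra_eq a b : abs b < abs a -> abs (GRing.add a b) = abs a.
Proof.
move=> H; apply: Rle_antisym.
  by have := Hna a b; rewrite Rmax_left //; lra.
have h := Hna (GRing.add a b) (GRing.opp b).
rewrite addrK (absN Habs) in h.
by move: h => /Rmax_Rle [h|h]; lra.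
Qed.

Definition psi (f : X -> k) (r : R) (y : k) : X -> k :=
  fun x => if Rlt_dec (abs (sub (f x) y)) r then k1 else k0.

Lemma psi01 f r y x : psi f r y x = k0 \/ psi f r y x = k1.
Proof. by rewrite /psi; case: Rlt_dec; [right|left]. Qed.

Lemma psi_Cbd f r y : CB f -> 0 < r -> CB (psi f r y).
Proof.
move=> [cf _] rp; split; last first.
  exists 1 => x; case: (psi01 f r y x) => ->; rewrite ?(abs0 Habs) ?(abs1 Habs); lra.
move=> x eps He.
have [U [oU [Ux HU]]] := cf x r rp.
exists U; split=> //; split=> // z Uz.
have -> : psi f r y z = psi f r y x.
  have hz := HU z Uz.
  rewrite /psi; case: Rlt_dec => h1; case: Rlt_dec => h2 //.
    exfalso; apply: h2.
    have := ultra_sub (f x) (f z) y; rewrite (absB Habs (f x) (f z)).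
    have := Rmax_lub_lt _ _ _ hz h1; move=> a1 a2; exact: Rle_lt_trans a2 a1.
  exfalso; apply: h1.
  have := ultra_sub (f z) (f x) y.
  have := Rmax_lub_lt _ _ _ hz h2; move=> a1 a2; exact: Rle_lt_trans a2 a1.
by rewrite subrr (abs0 Habs).
Qed.

Section Max.
Variable m : (X -> k) -> Prop.
Hypothesis Hm : is_maximal_ideal abs op m.

Lemma idem_split chi : CB chi -> (forall x, chi x = k0 \/ chi x = k1) ->
  m chi \/ m (fsub (fconst k1) chi).
Proof.
move=> cC c01.
have s1 : CB (fsub (fconst k1) chi) by apply: Cbd_sub => //; apply: Cbd_const.
case: (m_prime Hm cC s1); [|by left|by right].
apply: (@fext m (fconst k0)); first exact: (m0 Hm).
by move=> x; rewrite /fconst /fmul /fsub; case: (c01 x) => ->; ring.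
Qed.

Lemma cover_ind f r : CB f -> 0 < r -> forall s : seq k, forall chi, CB chi ->
  (forall x, chi x = k0 \/ chi x = k1) -> m (fsub (fconst k1) chi) ->
  (forall x, chi x = k1 -> exists y, y \in s /\ abs (sub (f x) y) < r) ->
  exists y, m (fsub (fconst k1) (psi f r y)).
Proof.
move=> fC rp s; elim: s => [|y s IH] chi cC c01 mc cov.
  exfalso; apply: (m_not1 Hm); apply: (fext mc) => x.
  rewrite /fsub /fconst; case: (c01 x) => [->|e]; first by ring.
  by have [y [] ] := cov x e.
have pC := psi_Cbd y fC rp.
have one0 : k1 <> k0 by apply/eqP; exact: oner_neq0.
set chi1 := fmul chi (psi f r y).
have c1C : CB chi1 by apply: Cbd_mul.
have c101 : forall x, chi1 x = k0 \/ chi1 x = k1.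
  by move=> x; rewrite /chi1 /fmul; case: (c01 x) => ->; case: (psi01 f r y x) => ->;
     rewrite ?mul0r ?mulr0 ?mul1r; auto.
case: (idem_split c1C c101) => [m1|m1]; last first.
  exists y.
  apply: (@fext m (fmul (fsub (fconst k1) (psi f r y)) (fsub (fconst k1) chi1))).
    apply: (m_mul Hm) => //; apply: Cbd_sub => //; exact: Cbd_const.
  move=> x; rewrite /fmul /fsub /fconst /chi1 /fmul.
  by case: (psi01 f r y x) => ->; ring.
set chi2 := fmul chi (fsub (fconst k1) (psi f r y)).
apply: (IH chi2).
- apply: Cbd_mul => //; apply: Cbd_sub => //; exact: Cbd_const.
- by move=> x; rewrite /chi2 /fmul /fsub /fconst; case: (c01 x) => ->; case: (psi01 f r y x) => ->;
     rewrite ?subrr ?subr0 ?mul0r ?mulr0 ?mul1r; auto.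
- apply: (@fext m (fadd (fsub (fconst k1) chi) chi1)); first exact: (m_add Hm).
  by move=> x; rewrite /fadd /fsub /fconst /chi1 /chi2 /fmul /fsub /fconst; ring.
move=> x e2.
have [hc hp] : chi x = k1 /\ psi f r y x = k0.
  move: e2; rewrite /chi2 /fmul /fsub /fconst.
  case: (c01 x) => ->; case: (psi01 f r y x) => ->; rewrite ?subrr ?subr0 ?mul0r ?mulr0 ?mul1r;
    move=> h //; by exfalso; apply: one0.
have [y' [iy' hy']] := cov x hc.
exists y'; split=> //.
move: iy'; rewrite in_cons => /orP [/eqP ey|//].
exfalso; move: hp; rewrite /psi -ey; case: Rlt_dec => // _ h; exact: one0.
Qed.

Lemma approx f r (s : seq k) : CB f -> 0 < r ->
  (forall x, exists y, y \in s /\ abs (sub (f x) y) < r) ->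
  exists y e, CB e /\ m (fsub (fsub f (fconst y)) e) /\ forall x, abs (e x) <= r.
Proof.
move=> fC rp cov.
have [y my] : exists y, m (fsub (fconst k1) (psi f r y)).
  apply: (@cover_ind f r fC rp s (fconst k1)).
  exact: Cbd_const.
  by move=> x; right.
  by apply: (fext (m0 Hm)) => x; rewrite /fsub /fconst; ring.
  by move=> x _; apply: cov.
have fy : CB (fsub f (fconst y)) by apply: Cbd_sub => //; exact: Cbd_const.
exists y, (fmul (fsub f (fconst y)) (psi f r y)); split; first by apply: Cbd_mul => //; exact: psi_Cbd.
split.
  apply: (@fext m (fmul (fsub f (fconst y)) (fsub (fconst k1) (psi f r y)))).
    exact: (m_mul Hm).
  by move=> x; rewrite /fmul /fsub /fconst; ring.
move=> x; rewrite /fmul /fsub /fconst /psi; case: Rlt_dec => h.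
  by rewrite mulr1; lra.
by rewrite mulr0 (abs0 Habs); lra.
Qed.

Lemma uniq_a f a b : m (fsub f (fconst a)) -> m (fsub f (fconst b)) -> a = b.
Proof.
move=> ma mb; apply: NNPP => nab.
have hd : 0 < abs (sub a b) by apply: (abs_neq0 Habs) => e; apply: nab; apply/eqP; rewrite -subr_eq0; apply/eqP.
apply: (@m_unit _ Hm (fsub (fsub f (fconst b)) (fsub f (fconst a))) (abs (sub a b))) => //.
  exact: (m_sub Hm).
move=> x; rewrite /fsub /fconst.
have e : sub (sub (f x) b) (sub (f x) a) = sub a b by ring.
rewrite e; apply: Rle_refl.
Qed.

Lemma close_a f y1 y2 e1 e2 r1 r2 :
  m (fsub (fsub f (fconst y1)) e1) -> (forall x, abs (e1 x) <= r1) ->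
  m (fsub (fsub f (fconst y2)) e2) -> (forall x, abs (e2 x) <= r2) ->
  abs (sub y1 y2) <= r1 + r2.
Proof.
move=> m1 b1 m2 b2; apply: Rnot_lt_le => H.
apply: (@m_unit _ Hm
  (fsub (fsub (fsub f (fconst y2)) e2) (fsub (fsub f (fconst y1)) e1)) (abs (sub y1 y2) - r1 - r2)).
- exact: (m_sub Hm).
- lra.
move=> x; rewrite /fsub /fconst.
set h := sub (sub (sub (f x) y2) (e2 x)) (sub (sub (f x) y1) (e1 x)).
have eq : sub y1 y2 = GRing.add (GRing.add h (GRing.opp (e1 x))) (e2 x) by rewrite /h; ring.
have t1 := absD Habs (GRing.add h (GRing.opp (e1 x))) (e2 x).
have t2 := absD Habs h (GRing.opp (e1 x)).
rewrite (absN Habs) in t2; rewrite -eq in t1.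
have := b1 x; have := b2 x; lra.
Qed.

End Max.
Section Exist.
Hypothesis Hcov : forall M r, 0 < r -> exists s : seq k,
  forall z, abs z <= M -> exists y, y \in s /\ abs (sub z y) < r.
Variable m : (X -> k) -> Prop.
Hypothesis Hm : is_maximal_ideal abs op m.

Lemma approx2 f r : CB f -> 0 < r ->
  exists y e, CB e /\ m (fsub (fsub f (fconst y)) e) /\ forall x, abs (e x) <= r.
Proof.
move=> fC rp; have [M HM] : exists M, forall x, abs (f x) <= M by case: fC.
have [s Hs] := Hcov M rp.
by apply: (approx Hm (s:=s)) => // x; apply: Hs.
Qed.

Lemma exists_fin (Htriv : forall x, abs x = if x == k0 then 0 else 1) f :
  CB f -> exists a, m (fsub f (fconst a)).
Proof.
move=> fC; have [y [e [eC [me be]]]] := approx2 (r := / 2) fC ltac:(lra).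
exists y; apply: (fext me) => x; rewrite /fsub.
have -> : e x = k0.
  have := be x; rewrite Htriv; case: eqP => // _; lra.
by rewrite oppr0 addr0.
Qed.

Lemma exists_cpl (Hc : complete_field abs) f :
  CB f -> exists a, m (fsub f (fconst a)).
Proof.
move=> fC.
pose r n := (/ 2) ^ n.
have rp : forall n, 0 < r n by move=> n; apply: pow_lt; lra.
pose P n y := exists e, CB e /\ m (fsub (fsub f (fconst y)) e) /\ forall x, abs (e x) <= r n.
have Pex : forall n, exists y, P n y by move=> n; apply: approx2.
pose u n := epsilon (inhabits k0) (P n).
have Pu : forall n, P n (u n) by move=> n; apply: epsilon_spec; apply: Pex.
have rsmall : forall eps, 0 < eps -> exists N, forall n, leq N n -> r n < eps.
  move=> eps He; have [N HN] := pow_lt_1_zero (/ 2) ltac:(rewrite Rabs_pos_eq; lra) eps He.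
  exists N => n /leP Hn; have := HN n Hn; rewrite Rabs_pos_eq //; apply: Rlt_le; exact: rp.
have [l Hl] : exists l, forall eps, 0 < eps -> exists N, forall n, leq N n ->
        abs (GRing.add (u n) (GRing.opp l)) < eps.
  apply: Hc => eps He.
  have [N HN] := rsmall (eps / 2) ltac:(lra).
  exists N => n p Hn Hp.
  have [e1 [_ [m1 b1]]] := Pu n; have [e2 [_ [m2 b2]]] := Pu p.
  have := close_a Hm m1 b1 m2 b2; have := HN n Hn; have := HN p Hp; lra.
exists l; apply: (m_closed Hm); first by apply: Cbd_sub => //; exact: Cbd_const.
move=> eps He.
have [N1 HN1] := rsmall (eps / 2) ltac:(lra).
have [N2 HN2] := Hl (eps / 2) ltac:(lra).
pose n := maxn N1 N2.
have [en [enC [mn bn]]] := Pu n.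
exists (fadd en (fconst (sub (u n) l))); split; first by apply: Cbd_add => //; exact: Cbd_const.
split.
  apply: (fext mn) => x; rewrite /fsub /fadd /fconst; ring.
move=> x; rewrite /fadd /fconst.
have := absD Habs (en x) (sub (u n) l).
have := bn x; have := HN1 n (leq_maxl _ _); have := HN2 n (leq_maxr _ _); lra.
Qed.
End Exist.

Lemma supnorm_lub (h : X -> k) : Defs.bounded abs h ->
  is_lub (fun y => y = 0 \/ exists x, y = abs (h x)) (supnorm abs h).
Proof.
move=> [M HM]; rewrite /supnorm /supR; apply: epsilon_spec.
have hb : bound (fun y => y = 0 \/ exists x, y = abs (h x)).
  exists (Rmax M 0) => y hy; case: hy => [->|[x ->]]; first exact: Rmax_r.
  by apply: Rle_trans (HM x) _; exact: Rmax_l.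
have hn : exists y, (fun y => y = 0 \/ exists x, y = abs (h x)) y by exists 0; left.
have [l Hl] := completeness _ hb hn.
by exists l.
Qed.

Lemma m_small m g d : is_maximal_ideal abs op m -> m g -> 0 < d -> exists x, abs (g x) < d.
Proof.
move=> Hm mg dp; apply: NNPP => H; apply: (m_unit Hm mg dp) => x.
apply: Rnot_lt_le => h; apply: H; by exists x.
Qed.

Lemma ortho m a g : is_maximal_ideal abs op m -> m g ->
  supnorm abs (fadd (fconst a) g) = Rmax (abs a) (supnorm abs g).
Proof.
move=> Hm mg.
have gC := m_Cbd Hm mg.
have agC : CB (fadd (fconst a) g) by apply: Cbd_add => //; exact: Cbd_const.
have [Nu Nl] := supnorm_lub (proj2 gC).
have [Ku Kl] := supnorm_lub (proj2 agC).
set N := supnorm abs g in Nu Nl *; set K := supnorm abs (fadd (fconst a) g) in Ku Kl *.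
have K0 : 0 <= K by apply: Ku; left.
have aK : abs a <= K.
  case: (classic (a = k0)) => [->|an]; first by rewrite (abs0 Habs).
  have [x hx] := m_small Hm mg (abs_neq0 Habs an).
  have := Ku (abs (fadd (fconst a) g x)) (or_intror (ex_intro _ x erefl)).
  by rewrite /fadd /fconst (ultra_eq hx).
apply: Rle_antisym.
  apply: Kl => y [->|[x ->]].
    by apply: Rle_trans (Rmax_l _ _); apply: (abs_ge0 Habs).
  apply: Rle_trans (Hna _ _) _; rewrite /fconst.
  apply: Rle_max_compat_l; apply: Nu; right; by exists x.
apply: Rmax_lub => //.
apply: Nl => y [->|[x ->]] //.
case: (Rle_lt_dec (abs (g x)) (abs a)) => h; first lra.
have := Ku (abs (fadd (fconst a) g x)) (or_intror (ex_intro _ x erefl)).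
rewrite /fadd /fconst addrC (ultra_eq h) //.
Qed.

Lemma evalm_spec (m : (X -> k) -> Prop) (f : X -> k) : (exists a, m (fsub f (fconst a))) -> m (fsub f (fconst (evalm m f))).
Proof. by move=> H; exact: (epsilon_spec (inhabits k0) (fun a => m (fsub f (fconst a))) H). Qed.

Lemma point_max x0 : is_maximal_ideal abs op (fun g => CB g /\ g x0 = k0).
Proof.
have one0 : k1 <> k0 by apply/eqP; exact: oner_neq0.
split.
  split; first by move=> f [].
  split; first by split; [exact: Cbd_const|].
  split; first by move=> f g [fC f0] [gC g0]; split; [exact: Cbd_add|rewrite /fadd f0 g0 addr0].
  by move=> h f hC [fC f0]; split; [exact: Cbd_mul|rewrite /fmul f0 mulr0].
split; first by move=> [_ h]; exact: one0.
move=> J [JC [J0 [Jadd Jmul]]] sub_J.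
case: (classic (forall f, J f -> CB f /\ f x0 = k0)) => H; first by left.
right.
have [g Jg] : exists g, J g /\ ~ (CB g /\ g x0 = k0).
  by apply: NNPP => H'; apply: H => f Jf; apply: NNPP => H2; apply: H'; exists f.
case: Jg => Jg ng.
have gC := JC g Jg.
have gn : g x0 <> k0 by move=> e; apply: ng.
set c := GRing.inv (g x0).
have t1 : J (fmul (fconst c) g) by apply: Jmul => //; exact: Cbd_const.
have t2 : J (fmul (fconst (GRing.opp c)) (fsub g (fconst (g x0)))).
  apply: sub_J; split.
    by apply: Cbd_mul; [exact: Cbd_const|apply: Cbd_sub => //; exact: Cbd_const].
  by rewrite /fmul /fsub /fconst subrr mulr0.
apply: (fext (Jadd _ _ t1 t2)) => x.
rewrite /fadd /fmul /fsub /fconst /c.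
have : GRing.mul (GRing.inv (g x0)) (g x0) = k1 by apply: mulVf; apply/eqP.
move=> e; rewrite -e; ring.
Qed.

Lemma lub_uniq (E : R -> Prop) a b : is_lub E a -> is_lub E b -> a = b.
Proof. move=> [ua la] [ub lb]; apply: Rle_antisym; [exact: la|exact: lb]. Qed.

Lemma sup_eq (Hex : forall m, is_maximal_ideal abs op m -> forall f, CB f -> exists a, m (fsub f (fconst a)))
  f : CB f -> supnorm abs f =
     supR (fun r => exists m, is_maximal_ideal abs op m /\ r = abs (evalm m f)).
Proof.
move=> fC.
have [Nu Nl] := supnorm_lub (proj2 fC).
set N := supnorm abs f in Nu Nl *.
have key : is_lub (fun y => y = 0 \/ exists m, is_maximal_ideal abs op m /\ y = abs (evalm m f)) N.
  split.
    move=> y [->|[m [Hm ->]]]; first by apply: Nu; left.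
    set a := evalm m f.
    have ma : m (fsub f (fconst a)) by apply: evalm_spec; exact: Hex.
    have e := ortho a Hm ma.
    have ef : fadd (fconst a) (fsub f (fconst a)) = f.
      by apply: functional_extensionality => x; rewrite /fadd /fsub /fconst; ring.
    rewrite ef -/N in e; rewrite e; exact: Rmax_l.
  move=> b Hb; apply: Nl => y [->|[x ->]]; first by apply: Hb; left.
  apply: Hb; right; exists (fun g => CB g /\ g x = k0); split; first exact: point_max.
  congr (abs _).
  apply: (uniq_a (point_max x) (f := f)).
    split; first by apply: Cbd_sub => //; exact: Cbd_const.
    by rewrite /fsub /fconst subrr.
  exact: (evalm_spec (Hex _ (point_max x) _ fC)).
rewrite /supR.
have key2 := key; apply: lub_uniq key2 _.
apply: (epsilon_spec (inhabits 0) (fun r => is_lub (fun y => y = 0 \/ exists m, is_maximal_ideal abs op m /\ y = abs (evalm m f)) r)).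
exists N; exact: key.
Qed.
End CbdSec.

Lemma triv_props (k : fieldType) (abs : k -> R) :
  (forall x : k, abs x = if x == (@GRing.zero k) then 0 else 1) ->
  is_absval abs /\ nonarchimedean abs.
Proof.
move=> Ht.
have nz : forall x y : k, x != (@GRing.zero k) -> y != (@GRing.zero k) -> True by [].
split; last first.
  move=> x y; rewrite !Ht.
  case: ifP => hxy; case: ifP => hx; case: ifP => hy;
    try (have := Rmax_l 0 0; have := Rmax_l 1 0; have := Rmax_r 0 1; have := Rmax_l 1 1; lra).
  exfalso; move/eqP: hx => hx; move/eqP: hy => hy.
  by move: hxy; rewrite hx hy addr0 eqxx.
split; first by move=> x; rewrite Ht; case: ifP => _; lra.
split.
  move=> x; rewrite Ht; split; first by case: eqP => // _; lra.
  by move=> ->; rewrite eqxx.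
split.
  move=> x y; rewrite !Ht mulf_eq0.
  by case: (x == (@GRing.zero k)); case: (y == (@GRing.zero k)) => /=; lra.
move=> x y; rewrite !Ht.
case: ifP => hxy; case: ifP => hx; case: ifP => hy; try lra.
exfalso; move/eqP: hx => hx; move/eqP: hy => hy.
by move: hxy; rewrite hx hy addr0 eqxx.
Qed.

Theorem mainTheorem12 (k : fieldType) (abs : k -> R)
  (Hk : finite_trivially_valued abs \/ local_field abs)
  (X : Type) (op : (X -> Prop) -> Prop) (HX : is_topology op) :
  (forall m : (X -> k) -> Prop, is_maximal_ideal abs op m ->
     (* k -> C_bd(X,k)/m is bijective, i.e. C_bd(X,k) = k (+) m *)
     (forall f, Cbd abs op f -> exists! a : k, m (fsub f (fconst a))) /\
     (* the decomposition is orthogonal *)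
     (forall (a : k) (g : X -> k), m g ->
        supnorm abs (fadd (fconst a) g) = Rmax (abs a) (supnorm abs g))) /\
  (forall f, Cbd abs op f ->
     supnorm abs f =
     supR (fun r => exists m, is_maximal_ideal abs op m /\ r = abs (evalm m f))).
Proof.
have [Habs [Hna Hcov]] : is_absval abs /\ nonarchimedean abs /\
  (forall M r, 0 < r -> exists s : seq k, forall z, abs z <= M ->
      exists y, y \in s /\ abs (GRing.add z (GRing.opp y)) < r).
  case: Hk => [[[s Hs] Ht]|[[Habs [Hna [pi [Hpi Hd]]]] [Hc [s0 [_ Hres]]]]].
    have [Habs Hna] := triv_props Ht.
    split=> //; split=> // M r rp; exists s => z _; exists z; split=> //.
    by rewrite subrr (abs0 Habs).
  split=> //; split=> // M r rp.
  exact: (local_cover Habs Hpi Hd Hres).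
have Hex : forall m, is_maximal_ideal abs op m -> forall f, Cbd abs op f ->
    exists a, m (fsub f (fconst a)).
  move=> m Hm f fC; case: Hk => [[_ Ht]|[_ [Hc _]]].
    exact: (exists_fin Habs Hna HX Hcov Hm Ht fC).
  exact: (exists_cpl Habs Hna HX Hcov Hm Hc fC).
split.
  move=> m Hm; split.
    move=> f fC; have [a ha] := Hex m Hm f fC.
    exists a; split=> // b hb; exact: (uniq_a Habs HX Hm ha hb).
  move=> a g mg; exact: (ortho Habs Hna HX a Hm mg).
move=> f fC; exact: (sup_eq Habs Hna HX Hex fC).
Qed.
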